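(* Let $G$ be a finite group with $|G| = 30p$, where $p$ is a prime with $p \ge 7$. Then: (1) the commutator subgroup $G'$ is cyclic; (2) $G' \cap Z(G) = \{e\}$; (3) $G \cong \mathbb{Z}_n \ltimes G'$ for some positive integer $n$; and (4) if $b$ is a generator of the factor $\mathbb{Z}_n$ in (3), and $\tau \in \mathbb{Z}$ is chosen such that $x^b = x^\tau$ for all $x \in G'$, then $\gcd(\tau - 1, |G'|) = 1$.
   Context: $G' = [G,G]$ is the commutator subgroup, $Z(G)$ the center, and $x^b = b^{-1} x b$ denotes conjugation. *)

(* Defs.v *)
From mathcomp Require Import all_boot all_order all_algebra all_fingroup all_solvable.
Set Implicit Arguments. Unset Strict Implicit. Unset Printing Implicit Defensive.

Definition expgz (gT : finGroupType) (x : gT) (z : int) : gT :=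
  match z with
  | Posz n => (x ^+ n)%g
  | Negz n => (x ^- n.+1)%g
  end.

(* Main.v *)
Require Import Defs.
From mathcomp Require Import all_boot all_order all_algebra all_fingroup all_solvable.
From mathcomp Require Import zify.

Section Helpers.
Set Implicit Arguments. Unset Strict Implicit.
Import GRing.Theory.
Local Open Scope group_scope.

Lemma burnside_prime (gT : finGroupType) (G Q : {group gT}) (q : nat) :
  prime q -> q.-Sylow(G) Q -> #|Q| = q -> 'N_G(Q) \subset 'C(Q) ->
  exists K : {group gT}, K ><| Q = G.
Proof.
move=> qpr sylQ oQ nQcQ.
have sQG : Q \subset G := pHall_sub sylQ.
have abQ : abelian Q by apply: cyclic_abelian; apply: prime_cyclic; rewrite oQ.
have abA : abelian (idm Q @* Q) by rewrite morphim_idm.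
pose tr := transfer_morphism G abA.
have key : forall g, g \in Q -> g != 1 -> tr g != 0%R.
  move=> g Qg ntg.
  have Gg : g \in G := subsetP sQG g Qg.
  have og : #[g] = q.
    have : #[g] %| q by rewrite -oQ order_dvdG.
    case/primeP: qpr => _ /[apply] /orP[/eqP|/eqP //].
    by move/eqP; rewrite order_eq1 (negPf ntg).
  have defQ : <[g]> = Q.
    by apply/eqP; rewrite eqEcard cycle_subG Qg oQ -og leqnn.
  pose X := transversal (rcosets Q G :* <[g]>) G.
  have trX : is_transversal X (rcosets Q G :* <[g]>) G.
    exact: transversalP (rcosets_cycle_partition sQG Gg).
  have sXG : X \subset G := transversal_sub trX.
  pose n x := #|<[g]> : Q :* x|.
  have n_dv x : n x %| q.
    rewrite -og /n /indexg -orbitRs card_orbit -[#[g]]/(#|<[g]>|).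
    exact: dvdn_indexg.
  have n_1q x : (n x == 1%N) || (n x == q).
    by case/primeP: qpr => _ /(_ _ (n_dv x)).
  have Hx x : x \in X -> n x = 1%N -> g ^ x^-1 = g.
    move=> Xx nx1.
    have := mulg_exp_card_rcosets Q g x; rewrite -/(n x) nx1 expg1 mem_rcoset.
    move=> Qgx0; have Qgx : g ^ x^-1 \in Q by rewrite conjgE invgK mulgA.
    have Gx : x^-1 \in G by rewrite groupV (subsetP sXG).
    have nQx : x^-1 \in 'N_G(Q).
      rewrite inE Gx; apply/normP; apply/eqP.
      rewrite eqEcard cardJg leqnn andbT.
      have -> : Q :^ x^-1 = <[g ^ x^-1]> by rewrite cycleJ defQ.
      by rewrite cycle_subG.
    have cQx := subsetP nQcQ _ nQx.
    by rewrite conjgE -(centP cQx g Qg) mulKg.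
  have := transfer_cycle_expansion sQG abA Gg trX.
  set fm := restrm _ _ => Etr.
  pose B := [set x | n x == 1%N].
  have valfm : val (fm g) = g.
    by rewrite /fm /= FiniteModule.fmodKcond mem_morphim.
  have Etr2 : transfer G abA g = (fm g *+ #|X :&: B|)%R.
    rewrite Etr (big_setID B) /=.
    rewrite (eq_bigr (fun _ => fm g)); last first.
      move=> x /setIP[Xx]; rewrite inE => /eqP nx1.
      by rewrite -/(n x) nx1 expg1 Hx.
    rewrite [X in (_ + X)%R]big1 ?addr0; last first.
      move=> x /setDP[Xx]; rewrite inE => nx1.
      have /orP[nx|/eqP nx] := n_1q x; first by rewrite nx in nx1.
      rewrite -/(n x) nx -og expg_order conj1g.
      apply: val_inj; rewrite /fm /= FiniteModule.fmodKcond FiniteModule.fmval0; by case: ifP.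
    exact: sumr_const.
  have Esum := sum_index_rcosets_cycle sQG Gg trX.
  rewrite (big_setID B) /= in Esum.
  have E1 : \sum_(i in X :&: B) n i = \sum_(i in X :&: B) 1.
    by apply: eq_bigr => x /setIP[Xx]; rewrite inE => /eqP.
  have E2 : \sum_(i in X :\: B) n i = \sum_(i in X :\: B) q.
    apply: eq_bigr => x /setDP[Xx]; rewrite inE => nx1.
    by have /orP[nx|/eqP nx] := n_1q x; first by rewrite nx in nx1.
  rewrite -/n E1 E2 in Esum.
  rewrite sum1_card sum_nat_const in Esum.
  have q'i : ~~ (q %| #|G : Q|).
    by have /and3P[_ _] := sylQ; rewrite p'natE.
  apply/eqP => tr0.
  have : val (transfer G abA g) = 1 by rewrite -[transfer _ _ _]/(tr g) tr0 FiniteModule.fmval0.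
  rewrite Etr2 FiniteModule.fmvalZ valfm => /eqP; rewrite -order_dvdn og => dq.
  by move: q'i; rewrite -Esum dvdn_addr ?dq // dvdn_mull.
have tiKQ : 'ker tr :&: Q = 1.
  apply/trivgP/subsetP => g /setIP[/mker trg Qg]; apply/set1P.
  by apply/eqP/negP => /negP ntg; move: (key g Qg ntg); rewrite trg eqxx.
exists ('ker tr)%G.
have nKQ : Q \subset 'N('ker tr) by apply: subset_trans (normal_norm (ker_normal tr)).
rewrite sdprodE //; apply/eqP; rewrite eqEcard mul_subG ?(normal_sub (ker_normal tr)) //=.
rewrite TI_cardMg // -(Lagrange (normal_sub (ker_normal tr))) leq_mul2l oQ.
have : #|tr @* G| = #|G : 'ker tr| by rewrite card_morphim setIid.
move=> <-; apply/orP; right.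
apply: leq_trans (max_card _) _.
rewrite -(card_imset _ val_inj) -oQ; apply: subset_leq_card.
apply/subsetP => _ /imsetP[u _ ->].
by have /morphimP[y _ Qy ->] := FiniteModule.fmodP u.
Qed.

Definition sqf (n : nat) := forall q, prime q -> logn q n <= 1.

Lemma sqf_dvd m n : 0 < n -> m %| n -> sqf n -> sqf m.
Proof. by move=> n0 mn h q qp; apply: leq_trans (dvdn_leq_log q n0 mn) (h q qp). Qed.

Lemma sqf_Sylow (gT : finGroupType) (G Q : {group gT}) q :
  sqf #|G| -> prime q -> q.-Sylow(G) Q -> #|Q| = if q %| #|G| then q else 1%N.
Proof.
move=> sq qp sylQ; rewrite (card_Hall sylQ) p_part.
have := sq q qp; case: ifP => qG.
  have : 0 < logn q #|G| by rewrite logn_gt0 mem_primes qp cardG_gt0 qG.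
  by case: (logn q #|G|) => [|[|]].
have -> : logn q #|G| = 0%N.
  by apply/eqP; rewrite -leqn0 leqNgt logn_gt0 mem_primes qp cardG_gt0 qG.
by [].
Qed.

Lemma sqf_Zgroup (gT : finGroupType) (A : {group gT}) : sqf #|A| -> Zgroup A.
Proof.
move=> sq; apply/forall_inP => V /SylowP[q qp sylV].
have := sqf_Sylow sq qp sylV; case: ifP => _ oV.
  by apply: prime_cyclic; rewrite oV.
by move/card1_trivg: oV => ->; apply: cyclic1.
Qed.

Lemma sqf_abelian_cyclic (gT : finGroupType) (A : {group gT}) :
  sqf #|A| -> abelian A -> cyclic A.
Proof.
by move=> sq abA; apply: nil_Zgroup_cyclic; [apply: sqf_Zgroup | apply: abelian_nil].
Qed.

Lemma NC_small (gT : finGroupType) (G Q : {group gT}) q :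
  prime q -> (forall s, prime s -> s %| #|G| -> q <= s) -> #|Q| = q ->
  'N_G(Q) \subset 'C(Q).
Proof.
move=> qp qmin oQ.
have nQN : 'N_G(Q) \subset 'N(Q) := subsetIr _ _.
have cycQ : cyclic Q by apply: prime_cyclic; rewrite oQ.
have iso := first_isog_loc (conj_aut Q) nQN.
rewrite ker_conj_aut in iso.
have nCN : 'N_G(Q) \subset 'N('C_('N_G(Q))(Q)).
  have := subcent_normal 'N_G(Q) Q; rewrite (setIidPl nQN).
  by case/andP.
have m1 : #|'N_G(Q) / 'C_('N_G(Q))(Q)| = 1%N.
  set m := #|_ / _|.
  have mdq : m %| q.-1.
    rewrite /m (card_isog iso) -(totient_prime qp) -oQ -card_Aut_cyclic //.
    exact: cardSg (Aut_conj_aut Q _).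
  have mdG : m %| #|G|.
    apply: dvdn_trans (dvdn_quotient _ _) (cardSg (subsetIl _ _)).
  apply/eqP; rewrite eqn_leq cardG_gt0 andbT leqNgt; apply/negP => m1.
  have sp := pdiv_prime m1.
  have := qmin _ sp (dvdn_trans (pdiv_dvd m) mdG).
  have q1 : 0 < q.-1 by case: q qp {qmin oQ mdq iso cycQ} => [|[|]].
  have := dvdn_leq q1 (dvdn_trans (pdiv_dvd m) mdq).
  by case: q qp {qmin oQ mdq iso cycQ q1} => // q' _; rewrite /= => h1 h2; have := leq_trans h2 h1; rewrite ltnn.
have : 'N_G(Q) / 'C_('N_G(Q))(Q) \subset [1] by rewrite (card1_trivg m1).
rewrite quotient_sub1 // => h; apply: subset_trans h _; exact: subsetIr.
Qed.

Lemma sqf_max_Sylow n : forall (gT : finGroupType) (G : {group gT}),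
  #|G| <= n -> sqf #|G| -> forall r, prime r ->
  (forall s, prime s -> s %| #|G| -> s <= r) ->
  exists R : {group gT}, r.-Sylow(G) R /\ R <| G.
Proof.
elim: n => [|n IH] gT G leGn sq r rp rmax.
  by move: (cardG_gt0 G); rewrite leqNgt ltnS leGn.
have [rG | nrG] := boolP (r.-group G).
  exists G; split; last exact: normal_refl.
  by rewrite pHallE subxx /= part_pnat_id.
have G1 : 1 < #|G|.
  rewrite ltnNge; apply/negP => G1; case/negP: nrG.
  apply/pgroupP => s sp sG; have := dvdn_leq (cardG_gt0 G) sG.
  by move=> h; have := prime_gt1 sp; rewrite ltnNge (leq_trans h G1).
set q := pdiv #|G|.
have qp : prime q := pdiv_prime G1.
have qmin : forall s, prime s -> s %| #|G| -> q <= s.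
  by move=> s sp sG; apply: pdiv_min_dvd (prime_gt1 sp) sG.
have qG : q %| #|G| := pdiv_dvd _.
have qr : q != r.
  apply/eqP => qr; case/negP: nrG; apply/pgroupP => s sp sG.
  by rewrite inE eqn_leq rmax // -qr qmin.
have [Q sylQ] := Sylow_exists q G.
have oQ : #|Q| = q by rewrite (sqf_Sylow sq qp sylQ) qG.
have [K defG] := burnside_prime qp sylQ oQ (NC_small qp qmin oQ).
have [nKG sQG _ _ _] := sdprod_context defG.
have oK : (#|K| * q)%N = #|G| by rewrite -oQ (sdprod_card defG).
have K0 : 0 < #|K| := cardG_gt0 K.
have leKn : #|K| <= n.
  rewrite -ltnS; apply: leq_trans leGn; rewrite -oK -{1}[#|K|]muln1 ltn_pmul2l //.
  exact: prime_gt1.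
have sqK : sqf #|K| by apply: sqf_dvd sq; rewrite // -oK dvdn_mulr.
have KG : #|K| %| #|G| by rewrite -oK dvdn_mulr.
have [R [sylR nRK]] := IH gT K leKn sqK r rp
  (fun s sp sK => rmax s sp (dvdn_trans sK KG)).
exists R; split; last first.
  rewrite -(normal_Hall_pcore sylR nRK).
  exact: char_normal_trans (pcore_char _ _) nKG.
rewrite pHallE (subset_trans (pHall_sub sylR) (normal_sub nKG)) /=.
rewrite (card_Hall sylR) -oK (partnM _ K0 (prime_gt0 qp)).
have -> : (q`_r)%N = 1%N by apply: part_p'nat; rewrite p'natE // dvdn_prime2 // eq_sym.
by rewrite muln1.
Qed.

Lemma sqf_der_cyclic n : forall (gT : finGroupType) (G : {group gT}),
  #|G| <= n -> sqf #|G| -> cyclic G^`(1).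
Proof.
elim: n => [|n IH] gT G leGn sq.
  by move: (cardG_gt0 G); rewrite leqNgt ltnS leGn.
have sqD : sqf #|G^`(1)| by apply: sqf_dvd sq; rewrite ?cardG_gt0 ?cardSg ?der_sub.
have [G1 | G1] := leqP #|G| 1.
  apply: sqf_abelian_cyclic => //; apply: abelianS (der_sub 1 G) _.
  have G1' : #|G| = 1%N by apply/eqP; rewrite eqn_leq G1 cardG_gt0.
  by rewrite (card1_trivg G1') abelian1.
set r := max_pdiv #|G|.
have rp : prime r := max_pdiv_prime G1.
have rmax : forall s, prime s -> s %| #|G| -> s <= r.
  by move=> s sp sG; apply: max_pdiv_max; rewrite mem_primes sp cardG_gt0.
have [R [sylR nRG]] := sqf_max_Sylow leGn sq rp rmax.
have oR : #|R| = r by rewrite (sqf_Sylow sq rp sylR) max_pdiv_dvd.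
have cycR : cyclic R by apply: prime_cyclic; rewrite oR.
have nRG' : G \subset 'N(R) := normal_norm nRG.
have sDC : G^`(1) \subset 'C(R).
  have iso := first_isog_loc (conj_aut R) nRG'.
  rewrite ker_conj_aut in iso.
  have nCG : G \subset 'N('C_G(R)).
    have := subcent_normal G R; rewrite (setIidPl nRG').
    by case/andP.
  have : G^`(1) \subset 'C_G(R).
    apply: der1_min nCG _.
    rewrite (isog_abelian iso); apply: abelianS (Aut_conj_aut R G) _.
    exact: Aut_cyclic_abelian.
  by move/subset_trans; apply; apply: subsetIr.
have ltGR : #|G / R| < #|G|.
  rewrite card_quotient // -(Lagrange (normal_sub nRG)) oR.
  by rewrite ltn_Pmull ?prime_gt1 // cardG_gt0.
have sqGR : sqf #|G / R| by apply: sqf_dvd sq; rewrite ?cardG_gt0 ?dvdn_quotient.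
have := IH _ (G / R)%G (leq_trans ltGR leGn) sqGR.
rewrite -quotient_der //.
case/cyclicP => y defDR.
have : y \in G^`(1) / R by rewrite defDR cycle_id.
case/morphimP => x nRx Dx defy.
have nRD : G^`(1) \subset 'N(R) := subset_trans (der_sub 1 G) nRG'.
have : G^`(1) / R \subset <[x]> / R by rewrite defDR defy quotient_cycle.
rewrite quotientSK // => sDRx.
apply: sqf_abelian_cyclic => //.
apply: abelianS sDRx _.
rewrite abelianM cyclic_abelian // cycle_abelian /= cycle_subG.
by apply: (subsetP sDC).
Qed.

Lemma expgz_fix (gT : finGroupType) (x : gT) (z : int) :
  (#[x] %| `|(z - 1)%R|)%N -> expgz x z = x.
Proof.
case: z => m /=.
  case: m => [|k].
    rewrite sub0r abszN /= dvdn1 order_eq1 => /eqP ->; by rewrite expg1n.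
  have -> : (Posz k.+1 - 1)%R = Posz k by rewrite -addn1 PoszD addrK.
  by rewrite /= order_dvdn expgS => /eqP ->; rewrite mulg1.
rewrite addn0 order_dvdn expgSr => /eqP h.
by rewrite -(mulgK x (x ^+ m.+1)) h mul1g invgK.
Qed.

Lemma sqf_coprime d e : sqf (d * e) -> 0 < d * e -> coprime d e.
Proof.
move=> sq de0; rewrite /coprime; apply/negP => /negP nc.
have g0 : 0 < gcdn d e by rewrite gcdn_gt0; move: de0; rewrite muln_gt0 => /andP[->].
have g1 : 1 < gcdn d e by move: g0 nc; case: (gcdn d e) => [|[|]].
have sp := pdiv_prime g1.
have sd : pdiv (gcdn d e) %| d := dvdn_trans (pdiv_dvd _) (dvdn_gcdl _ _).
have se : pdiv (gcdn d e) %| e := dvdn_trans (pdiv_dvd _) (dvdn_gcdr _ _).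
have : (pdiv (gcdn d e) ^ 2 %| d * e)%N by rewrite expnS expn1 dvdn_mul.
rewrite pfactor_dvdn // => h2.
by have := sq _ sp; rewrite leqNgt (leq_trans _ h2).
Qed.

End Helpers.

Theorem lemma2p10 (gT : finGroupType) (G : {group gT}) (p : nat) :
  prime p -> 7 <= p -> #|G| = 30 * p ->
  [/\ cyclic (G^`(1))%g,
      ((G^`(1)) :&: 'Z(G) = 1)%g
    & exists H : {group gT},
      [/\ cyclic H,
          ((G^`(1)) ><| H = G)%g
        & forall b : gT, generator H b ->
          forall tau : int,
            (forall x, x \in (G^`(1))%g -> x ^ b = expgz x tau)%g ->
            coprimez (tau - 1)%R #|(G^`(1))%g|]].
Proof.
Local Open Scope group_scope.
move=> pp p7 oG.
have sq : sqf #|G|.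
  move=> q qp; rewrite oG -[30]/(2 * (3 * 5))%N.
  rewrite !lognM ?muln_gt0 ?prime_gt0 // !logn_prime //.
  lia.
have cycD := sqf_der_cyclic (leqnn _) sq.
have abD : abelian G^`(1) := cyclic_abelian cycD.
have nDG := der_normal 1 G.
have sDG := der_sub 1 G.
have hallD : Hall G G^`(1).
  rewrite /Hall sDG /=.
  apply: sqf_coprime; rewrite (Lagrange sDG) //.
have [H /complP[tiDH defDH]] := splitsP (SchurZassenhaus_split hallD nDG).
have sHG : H \subset G by rewrite -defDH mulG_subr.
have nDH : H \subset 'N(G^`(1)) := subset_trans sHG (normal_norm nDG).
have defG : G^`(1) ><| H = G by rewrite sdprodE.
have oDH : (#|G^`(1)| * #|H|)%N = #|G| := sdprod_card defG.
have coDH : coprime #|G^`(1)| #|H| by apply: sqf_coprime; rewrite oDH.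
have abH : abelian H.
  apply/derG1P; apply/trivgP; rewrite -tiDH subsetI der_sub andbT.
  exact: dergS.
have cycH : cyclic H.
  apply: sqf_abelian_cyclic abH; apply: sqf_dvd sq; rewrite ?cardG_gt0 ?cardSg //.
have sCD : [~: G^`(1), H] \subset G^`(1) by rewrite commg_subl.
have nCD : G^`(1) \subset 'N([~: G^`(1), H]) := sub_abelian_norm abD sCD.
have commDH : [~: G^`(1), H] = G^`(1).
  apply/eqP; rewrite eqEsubset sCD /=.
  have nCG : G \subset 'N([~: G^`(1), H]).
    have : G^`(1) * H \subset 'N([~: G^`(1), H]) by rewrite mul_subG ?commg_normr.
    by rewrite defDH.
  apply: der1_min nCG _.
  have : abelian ((G^`(1) * H) / [~: G^`(1), H]).
    rewrite quotientMl // abelianM !quotient_abelian //=.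
    by apply: quotient_cents2r; rewrite commGC.
  by rewrite defDH.
have TI := coprime_abel_cent_TI nDH coDH abD.
rewrite commDH in TI.
split => //.
  apply/trivgP; rewrite -TI; apply: setIS.
  by apply: subset_trans (subsetIr _ _) (centS sHG).
exists H; split => // b genb tau hb.
rewrite coprimezE /= /coprime; apply/negP => /negP nc.
set a := `|(tau - 1)%R|%N in nc.
have g0 : 0 < gcdn a #|G^`(1)| by rewrite gcdn_gt0 cardG_gt0 orbT.
have g1 : 1 < gcdn a #|G^`(1)| by move: g0 nc; case: (gcdn _ _) => [|[|]].
have sp := pdiv_prime g1.
have sa : pdiv (gcdn a #|G^`(1)|) %| a := dvdn_trans (pdiv_dvd _) (dvdn_gcdl _ _).
have sD : pdiv (gcdn a #|G^`(1)|) %| #|G^`(1)| := dvdn_trans (pdiv_dvd _) (dvdn_gcdr _ _).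
have [x Dx ox] := Cauchy sp sD.
have xfix : x ^ b = x by rewrite hb // expgz_fix // ox.
have TI' : 'C_(G^`(1))(H) = 1 := TI.
have : x \in 'C_(G^`(1))(H).
  rewrite inE Dx /= (eqP genb) cent_cycle.
  by apply/cent1P/commgP/conjg_fixP.
rewrite TI' inE => /eqP x1.
by move: sp; rewrite -ox x1 order1.
Qed.
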